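(* Let $z=(z_1,\dots,z_l)$ be a complex vector split into sub-vectors, and let $g_j(z)=\tilde g_j(z)+c_j$, $j=1,\dots,m$, where $c_j\in\mathbb C$ and each $\tilde g_j(z_1,\dots,z_l)$ is multi-linear in the sub-vectors; let $f=\sum_{j=1}^m|g_j|^2$. Let \[ \Xi=\begin{pmatrix} z_1&z_1&\cdots&z_1\\ -z_2&0&\cdots&0\\ 0&-z_3&\cdots&0\\ \vdots&\vdots&\ddots&\vdots\\ 0&0&\cdots&-z_l\end{pmatrix} \] (with $l-1$ block columns, the $i$-th having $z_1$ in the first block and $-z_{i+1}$ in the $(i+1)$-st block). Assume at the current point $z$ the kernel of the mixed Wirtinger Hessian $\frac{\partial^2 f}{\partial\bar z\partial z}$ is spanned by the columns of $\Xi$. Then $\frac{\partial^2 f}{\partial\bar z\partial z}+\Xi\Xi^*$ is invertible, the limit $\lim_{\varepsilon\to0^+}\big(\frac{\partial^2 f}{\partial\bar z\partial z}+\varepsilon\Xi\Xi^*\big)^{-1}\frac{\partial f}{\partial\bar z}$ exists, and \[ z-\Big(\tfrac{\partial^2 f}{\partial\bar z\partial z}+\Xi\Xi^*\Big)^{-1}\tfrac{\partial f}{\partial\bar z}=z-\lim_{\varepsilon\to0}\Big(\tfrac{\partial^2 f}{\partial\bar z\partial z}+\varepsilon\Xi\Xi^*\Big)^{-1}\tfrac{\partial f}{\partial\bar z}. \]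
   Context: Wirtinger derivatives: $\frac{\partial}{\partial\bar z}=\frac12(\frac{\partial}{\partial\mathrm{Re}\,z}+i\frac{\partial}{\partial\mathrm{Im}\,z})$ componentwise; for $f=\sum|g_j|^2$ with $g_j$ holomorphic, $\frac{\partial f}{\partial\bar z}=\sum_j g_j\overline{g_j'}$ and $\frac{\partial^2 f}{\partial\bar z\partial z}=\sum_j\overline{g_j'}(g_j')^T$, where $g_j'$ is the column vector of holomorphic derivatives. Multi-linear means linear in each sub-vector $z_i$ separately when the others are fixed. *)

(* Defs.v *)
From HB Require Import structures.
From mathcomp Require Import all_boot all_order all_algebra.
From mathcomp Require Import all_classical all_reals all_analysis.
From mathcomp Require Import complex.
Set Implicit Arguments. Unset Strict Implicit. Unset Printing Implicit Defensive.
Import Order.TTheory GRing.Theory Num.Theory.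
Import numFieldNormedType.Exports.
Local Open Scope ring_scope.

Section Defs.
Variable R : realType.
Local Notation C := R[i].

Definition conjmx (p q : nat) (A : 'M[C]_(p, q)) : 'M[C]_(p, q) :=
  map_mx Num.conj A.
Definition adjmx (p q : nat) (A : 'M[C]_(p, q)) : 'M[C]_(q, p) :=
  (conjmx A)^T.

(* The complex vector z = (z_1, ..., z_l) with l = L.+1 sub-vectors of sizes
   n i lives in 'cV[C]_(\sum_i n i); its i-th sub-vector is submxcol z i. *)
Variables (L : nat) (n : 'I_L.+1 -> nat).
Local Notation N := (\sum_(i < L.+1) n i)%N.

Definition multilinear (h : 'cV[C]_N -> C) : Prop :=
  forall (zz : forall k : 'I_L.+1, 'cV[C]_(n k)) (i : 'I_L.+1) (a : C)
         (x y : 'cV[C]_(n i)),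
    h (\mxcol_k (dfwith zz i (a *: x + y) k))
    = a * h (\mxcol_k (dfwith zz i x k)) + h (\mxcol_k (dfwith zz i y k)).

Definition hol_grad (g : 'cV[C]_N -> C) (z : 'cV[C]_N) : 'cV[C]_N :=
  \col_k (derive1 (fun t : C^o => (g (z + t *: delta_mx k 0) : C^o)) 0).

(* For f = \sum_j |g_j|^2 with g_j holomorphic:
   df/dzbar = \sum_j g_j conj(g_j'),  d^2 f/(dzbar dz) = \sum_j conj(g_j') g_j'^T *)
Definition wgrad (m : nat) (g : 'I_m -> 'cV[C]_N -> C) (z : 'cV[C]_N)
  : 'cV[C]_N :=
  \sum_(j < m) (g j z *: conjmx (hol_grad (g j) z)).
Definition whess (m : nat) (g : 'I_m -> 'cV[C]_N -> C) (z : 'cV[C]_N)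
  : 'M[C]_N :=
  \sum_(j < m) (conjmx (hol_grad (g j) z) *m (hol_grad (g j) z)^T).

(* The matrix Xi: L = l-1 columns; column c has z_1 in block 0,
   -z_{c+2} (i.e. block lift ord0 c) in that block, 0 elsewhere. *)
Definition Xi (z : 'cV[C]_N) : 'M[C]_(N, L) :=
  \matrix_(k, c)
    ((\mxcol_i (if i == ord0 then submxcol z i
                else if i == lift ord0 c then - submxcol z i
                else 0)) : 'cV[C]_N) k 0.

End Defs.

(* Main.v *)
Require Import Defs.
From HB Require Import structures.
From mathcomp Require Import all_boot all_order all_algebra.
From mathcomp Require Import all_classical all_reals all_analysis.
From mathcomp Require Import complex.
Import Order.TTheory GRing.Theory Num.Theory.
Import numFieldTopology.Exports numFieldNormedType.Exports.
Local Open Scope ring_scope.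
Local Open Scope classical_set_scope.
Section Alg.
Variable R : realType.
Local Notation C := R[i].

Lemma adjmx_mul p q r (A : 'M[C]_(p, q)) (B : 'M[C]_(q, r)) :
  adjmx (A *m B) = adjmx B *m adjmx A.
Proof.
apply/matrixP => i j; rewrite !mxE rmorph_sum; apply: eq_bigr => k _.
by rewrite !mxE rmorphM mulrC.
Qed.

Lemma adjmxK p q (A : 'M[C]_(p, q)) : adjmx (adjmx A) = A.
Proof. by apply/matrixP => i j; rewrite !mxE conjCK. Qed.

Lemma adjmx0 p q : adjmx (0 : 'M[C]_(p, q)) = 0.
Proof. by apply/matrixP => i j; rewrite !mxE conjC0. Qed.

Lemma adjmx_tr p q (A : 'M[C]_(p, q)) : adjmx A^T = Defs.conjmx A.
Proof. by apply/matrixP => i j; rewrite !mxE. Qed.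

Lemma conjmx_mul p q r (A : 'M[C]_(p, q)) (B : 'M[C]_(q, r)) :
  Defs.conjmx (A *m B) = Defs.conjmx A *m Defs.conjmx B.
Proof.
apply/matrixP => i j; rewrite !mxE rmorph_sum; apply: eq_bigr => k _.
by rewrite !mxE rmorphM.
Qed.

Lemma quadE p (v : 'cV[C]_p) : (adjmx v *m v) 0 0 = \sum_k `|v k 0| ^+ 2.
Proof. by rewrite !mxE; apply: eq_bigr => k _; rewrite !mxE normCK mulrC. Qed.

Lemma quad_ge0 p (v : 'cV[C]_p) : 0 <= (adjmx v *m v) 0 0.
Proof. by rewrite quadE; apply: sumr_ge0 => k _; apply: exprn_ge0. Qed.

Lemma quad_eq0 p (v : 'cV[C]_p) : (adjmx v *m v) 0 0 = 0 -> v = 0.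
Proof.
rewrite quadE => /psumr_eq0P H; apply/matrixP => k l; rewrite (ord1 l) mxE.
have /eqP := H (fun _ _ => exprn_ge0 _ (normr_ge0 _)) k isT.
by rewrite sqrf_eq0 normr_eq0 => /eqP.
Qed.

Lemma quad_eq0' p (v : 'cV[C]_p) : adjmx v *m v = 0 -> v = 0.
Proof. by move=> h; apply: quad_eq0; rewrite h mxE. Qed.

Lemma unit_of_ker p (A : 'M[C]_p) :
  (forall x : 'cV[C]_p, A *m x = 0 -> x = 0) -> A \in unitmx.
Proof.
move=> hk; rewrite -unitmx_tr -row_free_unit; apply/inj_row_free => v hv.
have : A *m v^T = 0 by rewrite -[A]trmxK -trmx_mul hv trmx0.
by move/hk => /(congr1 trmx); rewrite trmxK trmx0.
Qed.




Lemma ker_trivial p K m (G : 'I_m -> 'cV[C]_p) (X : 'M[C]_(p, K)) (e : C) :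
  0 < e ->
  (forall x : 'cV[C]_p, (\sum_j Defs.conjmx (G j) *m (G j)^T) *m x = 0 ->
     exists y, x = X *m y) ->
  forall x : 'cV[C]_p, ((\sum_j Defs.conjmx (G j) *m (G j)^T) + e *: (X *m adjmx X)) *m x = 0
     -> x = 0.
Proof.
move=> he hk x hx.
set H := (\sum_(j < m) Defs.conjmx (G j) *m (G j)^T) in hk hx.
have E : (adjmx x *m ((H + e *: (X *m adjmx X)) *m x)) 0 0 =
   \sum_j (adjmx ((G j)^T *m x) *m ((G j)^T *m x)) 0 0
   + e * (adjmx (adjmx X *m x) *m (adjmx X *m x)) 0 0.
  rewrite mulmxDl mulmxDr mxE; congr (_ + _).
    rewrite /H mulmx_suml mulmx_sumr summxE; apply: eq_bigr => j _.
    by rewrite adjmx_mul adjmx_tr !mulmxA.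
  by rewrite -scalemxAl -scalemxAr mxE adjmx_mul adjmxK !mulmxA.
rewrite hx mulmx0 mxE in E.
have Sge : 0 <= \sum_j (adjmx ((G j)^T *m x) *m ((G j)^T *m x)) 0 0.
  by apply: sumr_ge0 => j _; apply: quad_ge0.
have Qge := @quad_ge0 _ (adjmx X *m x).
move/eqP: E; rewrite eq_sym paddr_eq0 //; last by rewrite mulr_ge0 // ltW.
move=> /andP[/eqP hS /eqP hQ].
have ha : forall j, (G j)^T *m x = 0.
  move/psumr_eq0P: hS => /(_ (fun j _ => quad_ge0 _ _)) h j.
  by apply: quad_eq0; apply: h.
have hw : adjmx X *m x = 0.
  by apply: quad_eq0; move/eqP: hQ; rewrite mulf_eq0 gt_eqF //= => /eqP.
have hH : H *m x = 0.
  by rewrite /H mulmx_suml big1 // => j _; rewrite -mulmxA ha mulmx0.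
case: (hk x hH) => y xy.
rewrite xy; apply: quad_eq0'; rewrite adjmx_mul -mulmxA -xy hw mulmx0.
done.
Qed.

End Alg.

Section ML.
Variables (R : realType) (L : nat) (n : 'I_L.+1 -> nat).
Local Notation C := R[i].
Local Notation N := (\sum_(i < L.+1) n i)%N.
Variable h : 'cV[C]_N -> C.
Hypothesis hml : multilinear h.

Definition ell (zz : forall k, 'cV[C]_(n k)) i (x : 'cV[C]_(n i)) :=
  h (\mxcol_k (dfwith zz i x k)).

Lemma ell0 zz i : ell zz i 0 = 0.
Proof.
have E : ell zz i 0 = ell zz i 0 + ell zz i 0.
  by move: (hml zz i 1 0 0); rewrite scaler0 addr0 mul1r.
by apply: (addrI (ell zz i 0)); rewrite addr0 -E.
Qed.

Lemma ellD zz i x y : ell zz i (x + y) = ell zz i x + ell zz i y.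
Proof. by move: (hml zz i 1 x y); rewrite scale1r mul1r. Qed.

Lemma ellZ zz i a x : ell zz i (a *: x) = a * ell zz i x.
Proof.
rewrite /ell; move: (hml zz i a x 0); rewrite addr0 => ->.
by rewrite -/(ell zz i 0) ell0 addr0.
Qed.

Lemma ell_sum zz i p (F : 'I_p -> 'cV[C]_(n i)) :
  ell zz i (\sum_(j < p) F j) = \sum_(j < p) ell zz i (F j).
Proof.
elim/big_rec2: _ => [|j y1 y2 _ <-]; first exact: ell0.
by rewrite ellD.
Qed.

Lemma ell_expand zz i x :
  ell zz i x = \sum_r x r 0 * ell zz i (delta_mx r 0).
Proof.
rewrite {1}(matrix_sum_delta x) ell_sum; apply: eq_bigr => r _.
by rewrite big_ord1 ellZ.
Qed.

Lemma ell_self zz i : ell zz i (zz i) = h (\mxcol_k zz k).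
Proof. by rewrite /ell; congr h; apply: eq_mxcol => k; case: dfwithP. Qed.


Lemma Rank_eq i b (s : 'I_(n b)) (r : 'I_(n i)) :
  (@tagnat.Rank _ n b s == @tagnat.Rank _ n i r) = (b == i) && (s == r :> nat).
Proof. by rewrite -val_eqE tagnat.eq_Rank. Qed.

Lemma shift (z : 'cV[C]_N) i r t :
  z + t *: delta_mx (@tagnat.Rank _ n i r) 0 =
  \mxcol_k dfwith (fun b => submxcol z b) i (t *: delta_mx r 0 + submxcol z i) k.
Proof.
apply/mxcolP => b; rewrite mxcolK submxcolD; case: dfwithP => [|b' hb].
  rewrite addrC; congr (_ + _); apply/matrixP => s l; rewrite !mxE.
  by rewrite Rank_eq eqxx.
rewrite -[RHS]addr0; congr (_ + _); apply/matrixP => s l; rewrite !mxE.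
by rewrite Rank_eq eq_sym (negbTE hb) mulr0.
Qed.


Lemma der_aff (a D : C) :
  derive1 (fun t : C^o => (a + t * D : C^o)) 0 = D.
Proof.
rewrite derive1E.
have H : is_derive (0 : C^o) (1 : C^o) (fun t : C^o => (a + t * D : C^o)) D.
  apply: is_derive_eq.
  by rewrite /= scaler0 !add0r; exact: mulr1.
exact: derive.derive_val.
Qed.

Lemma grad_entry (c : C) (z : 'cV[C]_N) i r :
  hol_grad (fun w => h w + c) z (@tagnat.Rank _ n i r) 0 =
  ell (fun b => submxcol z b) i (delta_mx r 0).
Proof.
rewrite mxE.
have -> : (fun t : C^o => (h (z + t *: delta_mx (@tagnat.Rank _ n i r) 0) + c : C^o))
  = (fun t : C^o => ((h z + c) + t * ell (fun b => submxcol z b) i (delta_mx r 0) : C^o)).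
  apply: funext => t; rewrite shift.
  move: (hml (fun b => submxcol z b) i t (delta_mx r 0) (submxcol z i)) => ->.
  rewrite -/(ell (fun b => submxcol z b) i (submxcol z i)) ell_self submxcolK.
  by rewrite [RHS]addrC addrA.
exact: der_aff.
Qed.


Lemma ellN zz i x : ell zz i (- x) = - ell zz i x.
Proof. by rewrite -scaleN1r ellZ mulN1r. Qed.

Lemma Xi_grad (c : C) (z : 'cV[C]_N) :
  (Xi z)^T *m hol_grad (fun w => h w + c) z = 0.
Proof.
set G := hol_grad _ z.
apply/matrixP => cc l; rewrite (ord1 l) [RHS]mxE.
set s := (\mxcol_i (if i == ord0 then submxcol z i
                else if i == lift ord0 cc then - submxcol z i
                else 0) : 'cV[C]_N).
have -> : ((Xi z)^T *m G) cc 0 = (s^T *m G) 0 0.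
  by rewrite !mxE; apply: eq_bigr => k _; rewrite !mxE.
rewrite -[G]submxcolK tr_mxcol mul_mxrow_mxcol summxE.
have term : forall k (x : 'cV[C]_(n k)),
    (x^T *m submxcol G k) 0 0 = ell (fun b => submxcol z b) k x.
  move=> k x; rewrite (ell_expand _ _ x) mxE; apply: eq_bigr => r _.
  by rewrite -(grad_entry c) !mxE.
under eq_bigr => k _ do rewrite term.
rewrite (bigD1 ord0) //= (bigD1 (lift ord0 cc)) //= eqxx.
rewrite big1; last first.
  by move=> k /andP[k0 kl]; rewrite (negbTE k0) (negbTE kl) ell0.
by rewrite ellN !ell_self submxcolK addr0 subrr.
Qed.

End ML.

Lemma adjmx_conj_tr (R : realType) p q (A : 'M[R[i]]_(p, q)) :
  adjmx A = Defs.conjmx A^T.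
Proof. by apply/matrixP => i j; rewrite !mxE. Qed.

Lemma conjmx0 (R : realType) p q : Defs.conjmx (0 : 'M[R[i]]_(p, q)) = 0.
Proof. by apply/matrixP => i j; rewrite !mxE conjC0. Qed.

Theorem lemma9 (R : realType) (L : nat) (n : 'I_L.+1 -> nat) (m : nat)
    (gt : 'I_m -> 'cV[R[i]]_(\sum_(i < L.+1) n i) -> R[i])
    (c : 'I_m -> R[i]) (z : 'cV[R[i]]_(\sum_(i < L.+1) n i)) :
  (forall j, multilinear (gt j)) ->
  let g := fun (j : 'I_m) (w : 'cV[R[i]]_(\sum_(i < L.+1) n i)) => gt j w + c j in
  let H := whess g z in
  let b := wgrad g z in
  let X := Xi z in
  (forall x : 'cV[R[i]]_(\sum_(i < L.+1) n i),
      H *m x = 0 <-> exists y : 'cV[R[i]]_L, x = X *m y) ->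
  (H + X *m adjmx X) \in unitmx /\
  exists l : 'cV[R[i]]_(\sum_(i < L.+1) n i),
    ((fun eps : R => invmx (H + (Complex eps 0) *: (X *m adjmx X)) *m b)
       @ 0^'+ --> (l : 'cV[R[i]^o]_(\sum_(i < L.+1) n i))) /\
    z - invmx (H + X *m adjmx X) *m b = z - l.
Proof.
move=> hml g H b X hk.
have XG : forall j, adjmx X *m Defs.conjmx (hol_grad (g j) z) = 0.
  move=> j; rewrite adjmx_conj_tr -conjmx_mul.
  by rewrite /X /g (@Xi_grad _ _ _ _ (hml j)) conjmx0.
have ker : forall e : R[i], 0 < e -> forall x : 'cV[R[i]]_(\sum_(i < L.+1) n i),
    (H + e *: (X *m adjmx X)) *m x = 0 -> x = 0.
  move=> e he x hx.
  have hk' : forall y : 'cV[R[i]]_(\sum_(i < L.+1) n i),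
    (\sum_(j < m) Defs.conjmx (hol_grad (g j) z) *m (hol_grad (g j) z)^T) *m y = 0
    -> exists y', y = X *m y'.
    by move=> y hy; apply/hk.
  exact: (@ker_trivial R _ _ _ _ _ _ he hk' x hx).
have unit_e : forall e : R[i], 0 < e -> H + e *: (X *m adjmx X) \in unitmx.
  by move=> e he; apply: unit_of_ker; apply: ker.
have unit1 : H + X *m adjmx X \in unitmx.
  by rewrite -[X *m adjmx X]scale1r; apply: unit_e; apply: ltr01.
have Xb : adjmx X *m b = 0.
  rewrite /b /wgrad mulmx_sumr big1 // => j _.
  by rewrite -scalemxAr XG scaler0.
have XH : adjmx X *m H = 0.
  rewrite /H /whess mulmx_sumr; apply: big1 => j _.
  by rewrite mulmxA XG mul0mx.
set u := invmx (H + X *m adjmx X) *m b.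
have hu : (H + X *m adjmx X) *m u = b by rewrite /u mulKVmx.
have h2 : adjmx X *m (X *m adjmx X *m u) = 0.
  have := congr1 (mulmx (adjmx X)) hu.
  by rewrite Xb mulmxDl mulmxDr mulmxA XH mul0mx add0r.
have XXu : X *m adjmx X *m u = 0.
  rewrite -mulmxA; apply: quad_eq0'.
  by rewrite adjmx_mul -mulmxA [X *m (adjmx X *m u)]mulmxA h2 mulmx0.
have hMe : forall e : R[i], 0 < e -> invmx (H + e *: (X *m adjmx X)) *m b = u.
  move=> e he.
  have <- : (H + e *: (X *m adjmx X)) *m u = b.
    by rewrite mulmxDl -scalemxAl XXu scaler0 addr0 -hu mulmxDl XXu addr0.
  by rewrite mulKmx // unit_e.
split => //; exists u; split => //.
apply: (@cvg_near_cst R 'cV[R[i]^o]_(\sum_(i < L.+1) n i) u).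
apply: filterS (nbhs_right_gt 0) => eps he /=.
by rewrite hMe // ltcE /= he eqxx.
Qed.
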